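(* Let $\mathcal N=(\mathcal L,\mathcal I,D_{\mathcal L})$ be a network with a binary collision profile and character $D^*$. (i) If $S$ is a collision-free framed schedule of frame length $T_F\ge 2D^*+1$ whose rate vector $R_S$ exists, then $R_S\in(1-D^*/T_F)\,\widetilde{\mathcal R}^{(\mathcal L,\mathcal I)}$, and hence $R_S\in\widetilde{\mathcal R}^{(\mathcal L,\mathcal I)}$. (ii) For every $R\in\widetilde{\mathcal R}^{(\mathcal L,\mathcal I)}$ and every $\epsilon>0$ there exist a frame length $T_F$ and a collision-free framed schedule $S$ of frame length $T_F$ whose rate vector exists and satisfies $R_S(l)\ge R(l)-\epsilon$ for all $l\in\mathcal L$.
   Context: A network is a triple $\mathcal N=(\mathcal L,\mathcal I,D_{\mathcal L})$ where $\mathcal L$ is a finite nonempty set of links, each $\mathcal I(l)$ is a collection of nonempty subsets of $\mathcal L$, and $D_{\mathcal L}$ assigns an integer $D_{\mathcal L}(l,l')$ to every pair with $l'\in\phi$ for some $\phi\in\mathcal I(l)$. The profile is binary if every $\phi\in\mathcal I(l)$ is a singleton; then $\mathcal I(l)$ is identified with a subset of $\mathcal L$. The character is $D^*=\max_{l}\max_{\phi\in\mathcal I(l)}\max_{l'\in\phi}|D_{\mathcal L}(l,l')|$ (0 if there are no collision sets). A schedule is a map $S:\mathcal L\times\mathbb Z\to\{0,1\}$; $S(l,t)$ has a collision if there is $\phi\in\mathcal I(l)$ with $S(l',t+D_{\mathcal L}(l,l'))=1$ for all $l'\in\phi$; $S$ is collision free if no $(l,t)$ with $S(l,t)=1$ has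 a collision. $R_S(l)=\lim_{T\to\infty}\frac1T\sum_{t=0}^{T-1}\iota\big(S(l,t)=1\text{ and collision free}\big)$ when the limit exists; $R_S=(R_S(l))_l$ is the rate vector when all limits exist. For an integer $T_F\ge D^*+1$, a framed schedule of frame length $T_F$ is a schedule $S$ with $S(l,t)=0$ for $t<0$, such that for every $k\ge0$ and every $l$: $S(l,kT_F+i)=0$ for $i=T_F-D^*,\dots,T_F-1$, and the values $S(l,kT_F+i)$, $i=0,\dots,T_F-D^*-1$, are all equal. An independent set of $(\mathcal L,\mathcal I)$ is a subset $A\subseteq\mathcal L$ such that there are no $l\in A$ and $\phi\in\mathcal I(l)$ with $\phi\subseteq A$; $\widetilde{\mathcal R}^{(\mathcal L,\mathcal I)}\subseteq\mathbb R^{\mathcal L}$ is the convex hull of the indicator vectors of all independent sets of $(\mathcal L,\mathcal I)$. *)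

(* Defs.v *)
From HB Require Import structures.
From mathcomp Require Import all_boot all_order all_algebra.
From mathcomp Require Import all_classical all_reals all_analysis.
Set Implicit Arguments. Unset Strict Implicit. Unset Printing Implicit Defensive.
Import Order.TTheory GRing.Theory Num.Theory.
Import numFieldNormedType.Exports.
Local Open Scope ring_scope.
Local Open Scope classical_set_scope.

(* A network with binary collision profile on the finite link type T:
   I : T -> {set T}   (I l = the set of links l' with {l'} in I(l)),
   D : T -> T -> int  (only its values on pairs with l' \in I l matter). *)

Definition Dstar (T : finType) (I : T -> {set T}) (D : T -> T -> int) : nat :=
  (\max_(l : T) \max_(l' in I l) `|D l l'|)%N.

Definition schedule (T : finType) := T -> int -> bool.

Definition has_collision (T : finType) (I : T -> {set T}) (D : T -> T -> int)
  (S : schedule T) (l : T) (t : int) : bool :=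
  [exists l' in I l, S l' (t + D l l')].

Definition collision_free (T : finType) (I : T -> {set T}) (D : T -> T -> int)
  (S : schedule T) : Prop :=
  forall l t, S l t -> ~~ has_collision I D S l t.

Definition avg_success (R : realType) (T : finType) (I : T -> {set T})
  (D : T -> T -> int) (S : schedule T) (l : T) (n : nat) : R :=
  (n%:R)^-1 * \sum_(t < n) ((S l (Posz t) && ~~ has_collision I D S l (Posz t)) : nat)%:R.

Definition rate_vector (R : realType) (T : finType) (I : T -> {set T})
  (D : T -> T -> int) (S : schedule T) (r : T -> R) : Prop :=
  forall l, (fun n : nat => avg_success R I D S l n) @ \oo --> r l.

Definition framed (T : finType) (I : T -> {set T}) (D : T -> T -> int)
  (TF : nat) (S : schedule T) : Prop :=
  let Ds := Dstar I D in
  (Ds.+1 <= TF)%N /\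
  (forall l (t : int), t < 0 -> S l t = false) /\
  (forall l (k : nat),
     (forall i : nat, (TF - Ds <= i < TF)%N -> S l (Posz (k * TF + i)) = false) /\
     (forall i j : nat, (i < TF - Ds)%N -> (j < TF - Ds)%N ->
        S l (Posz (k * TF + i)) = S l (Posz (k * TF + j)))).

Definition independent (T : finType) (I : T -> {set T}) (A : {set T}) : bool :=
  [forall l in A, [forall l' in I l, l' \notin A]].

Definition in_indep_hull (R : realType) (T : finType) (I : T -> {set T})
  (x : T -> R) : Prop :=
  exists w : {set T} -> R,
    (forall A, 0 <= w A) /\
    (forall A, ~~ independent I A -> w A = 0) /\
    \sum_(A : {set T}) w A = 1 /\
    (forall l, x l = \sum_(A : {set T}) w A * (l \in A)%:R).

(* Main.v *)
Require Import Defs.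
From HB Require Import structures.
From mathcomp Require Import all_boot all_order all_algebra.
From mathcomp Require Import all_classical all_reals all_analysis.
Import Order.TTheory GRing.Theory Num.Theory.
Import numFieldNormedType.Exports.
From mathcomp Require Import zify ring lra.
Local Open Scope ring_scope.
Local Open Scope classical_set_scope.

Lemma cvg_bigsum (R : realType) (X : Type) (F : set_system X) (FF : Filter F)
  (I : Type) (r : seq I) (f : I -> X -> R) (a : I -> R) :
  (forall i, f i x @[x --> F] --> a i) ->
  (\sum_(i <- r) f i x) @[x --> F] --> \sum_(i <- r) a i.
Proof.
move=> H; elim: r => [|i r IH].
  under eq_fun do rewrite big_nil. rewrite big_nil; exact: cvg_cst.
under eq_fun do rewrite big_cons. rewrite big_cons.
exact: (cvgD (H i) IH).
Qed.

Lemma cluster_lin (R : realType) (V : finType) (c : V -> R)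
  (u : nat -> prod_topology (fun _ : V => R)) (w : prod_topology (fun _ : V => R)) (y : R) :
  cluster (u @ \oo) w ->
  (\sum_A u n A * c A) @[n --> \oo] --> y ->
  \sum_A w A * c A = y.
Proof.
pose PT := prod_topology (fun _ : V => R).
have H : forall A : V, (fun x : PT => x A * c A) x @[x --> w] --> w A * c A.
  move=> A.
  have := (@cvgM R PT (nbhs w) _ (fun x : PT => x A) (fun=> c A) (w A) (c A)).
  apply. exact: (@proj_continuous V (fun _ => R) A w). exact: cvg_cst.
have Hl := (@cvg_bigsum R PT (nbhs w) _ _ (index_enum V) (fun A (x : PT) => x A * c A) (fun A => w A * c A) H).
rewrite cluster_cvgE => -[G PG [Gw uG]] Hy.
have h1 : (fun x : PT => \sum_(A <- index_enum V) x A * c A) @ G --> \sum_(A <- index_enum V) w A * c A.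
  move=> P /Hl /= HP. apply: Gw. exact: HP.
have h2 : (fun x : PT => \sum_(A <- index_enum V) x A * c A) @ G --> y.
  move=> P /Hy /= HP. apply: uG. exact: HP.
exact: (norm_cvg_unique h1 h2).
Qed.

Lemma seq_cluster (R : realType) (V : finType)
  (u : nat -> prod_topology (fun _ : V => R)) :
  (forall n A, 0 <= u n A <= 1) ->
  exists w : prod_topology (fun _ : V => R),
    (forall A, 0 <= w A <= 1) /\ cluster (u @ \oo) w.
Proof.
move=> Hu.
pose PT := prod_topology (fun _ : V => R).
have Cc := @tychonoff V (fun _ => R) (fun _ => `[(0:R), 1]) (fun _ => @segment_compact R 0 1).
have [w [Cw clw]] : [set f : PT | forall i, `[(0:R), 1] (f i)] `&` cluster (u @ \oo) !=set0.
  apply: Cc.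
  exists 0%N => // n _ A.
  by rewrite /mkset in_itv /= Hu.
exists w; split => // A.
Qed.

Lemma sum_ind (R : realType) (V : finType) (f : V -> R) (A : V) :
  \sum_B f B * (B == A)%:R = f A.
Proof.
rewrite (bigD1 A) //= eqxx mulr1 big1 ?addr0 // => B /negbTE ->.
by rewrite mulr0.
Qed.

Lemma hull_closed (R : realType) (T : finType) (I : T -> {set T})
  (u : nat -> T -> R) (x : T -> R) :
  (forall n, in_indep_hull I (u n)) ->
  (forall l, (fun n => u n l) @ \oo --> x l) ->
  in_indep_hull I x.
Proof.
move=> Hu Hx.
have [W HW] := choice Hu.
have Wb : forall n A, 0 <= W n A <= 1.
  move=> n A; have [H0 [_ [H1 _]]] := HW n.
  rewrite H0 /= -H1 (bigD1 A) //= lerDl sumr_ge0 //.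
have [w [wb clw]] := @seq_cluster R _ W Wb.
exists w; split; [|split; [|split]].
- by move=> A; case/andP: (wb A).
- move=> A nA.
  rewrite -(@sum_ind R _ w A).
  apply: (@cluster_lin R _ (fun B => (B == A)%:R) W w 0 clw).
  apply: cvg_near_cst; apply: nearW => n.
  rewrite sum_ind. by have [_ [-> //]] := HW n.
- under eq_bigr do rewrite -[w _]mulr1.
  apply: (@cluster_lin R _ (fun=> 1) W w 1 clw).
  apply: cvg_near_cst; apply: nearW => n.
  under eq_bigr do rewrite mulr1.
  by have [_ [_ [-> _]]] := HW n.
- move=> l.
  rewrite (@cluster_lin R _ (fun B : {set T} => (l \in B)%:R) W w (x l) clw) //.
  suff -> : (fun n => \sum_(A : {set T}) W n A * (l \in A)%:R) = (fun n => u n l) by exact: Hx.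
  by apply: funext => n; have [_ [_ [_ ->]]] := HW n.
Qed.


Section Comb.
Variables (T : finType) (I : T -> {set T}) (D : T -> T -> int).
Local Notation Ds := (Dstar I D).

Lemma Dstar_ge l l' : l' \in I l -> (`|D l l'| <= Ds)%N.
Proof.
move=> H; rewrite /Dstar.
apply: leq_trans (leq_bigmax l).
by rewrite (bigD1 l') //= leq_maxl.
Qed.

Lemma framed_at TF S l k i : framed I D TF S -> (i < TF)%N ->
  S l (Posz (k * TF + i)) = (i < TF - Ds)%N && S l (Posz (k * TF)).
Proof.
move=> [hTF [_ hk]] hi; have [h1 h2] := hk l k.
case: (ltnP i (TF - Ds)) => hi2 /=.
  rewrite -{2}[(k * TF)%N]addn0; apply: h2 => //; lia.
by apply: h1; rewrite hi2 hi.
Qed.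

Lemma framed_count TF S l K : framed I D TF S ->
  (\sum_(t < K * TF) S l (Posz t) = (TF - Ds) * \sum_(k < K) S l (Posz (k * TF)))%N.
Proof.
move=> HF; have hTF : (Ds < TF)%N by case: HF.
elim: K => [|K IH]; first by rewrite mul0n !big_ord0 muln0.
rewrite mulSnr big_split_ord /= IH big_ord_recr /= mulnDr; congr (_ + _)%N.
rewrite (eq_bigr (fun i : 'I_TF => (((i < TF - Ds)%N && S l (Posz (K * TF))) : nat))); last first.
  by move=> i _; rewrite framed_at.
case: (S l (Posz (K * TF))); last by rewrite muln0 big1 // => i _; rewrite andbF.
rewrite muln1 -(big_mkord xpredT (fun i => (((i < TF - Ds)%N && true) : nat))).
rewrite (big_cat_nat _ (n := (TF - Ds)%N)) //=; last by rewrite leq_subr.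
rewrite (eq_big_nat _ _ (F2 := fun=> 1%N)); last by move=> i /andP [_ ->].
rewrite [X in (_ + X)%N](eq_big_nat _ _ (F2 := fun=> 0%N)); last first.
  by move=> i /andP [h _]; rewrite andbT ltnNge h.
by rewrite !sum_nat_const_nat subn0 muln1 muln0 addn0.
Qed.

Lemma frame_indep TF S k : framed I D TF S -> collision_free I D S ->
  (2 * Ds + 1 <= TF)%N -> independent I [set l | S l (Posz (k * TF))].
Proof.
move=> HF cf hTF.
apply/forallP => l; apply/implyP; rewrite inE => Hl.
apply/forallP => l'; apply/implyP => Hl'; rewrite inE; apply/negP => Hl'2.
have hd := @Dstar_ge l l' Hl'.
have key : forall i j : nat, (i < TF - Ds)%N -> (j < TF - Ds)%N ->
    Posz (k * TF + i) + D l l' = Posz (k * TF + j) -> False.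
  move=> i j hi hj he.
  have Si : S l (Posz (k * TF + i)) by rewrite framed_at //; [rewrite hi Hl | lia].
  have := cf _ _ Si; move/existsPn/(_ l'); rewrite Hl' /= he.
  by rewrite framed_at ?hj ?Hl'2 //; lia.
move: hd; case Hd: (D l l') => [n|n] /= hd.
  apply: (key 0%N n); try lia.
apply: (key n.+1 0%N); try lia.
Qed.
End Comb.


Lemma indep0 (T : finType) (I : T -> {set T}) : independent I finset.set0.
Proof. by apply/forallP => l; rewrite inE. Qed.

Lemma hull_scale (R : realType) (T : finType) (I : T -> {set T}) (x : T -> R) (a : R) :
  in_indep_hull I x -> 0 <= a <= 1 -> in_indep_hull I (fun l => a * x l).
Proof.
move=> [w [w0 [wi [w1 wx]]]] /andP [a0 a1].
exists (fun A => a * w A + (1 - a) * (A == finset.set0)%:R); split; [|split; [|split]].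
- move=> A; apply: addr_ge0; apply: mulr_ge0 => //; by rewrite ?subr_ge0.
- move=> A nA; rewrite wi // mulr0 add0r.
  have -> : (A == finset.set0) = false by apply/negbTE; apply: contraNneq nA => ->; exact: indep0.
  by rewrite mulr0.
- rewrite big_split /= -!mulr_sumr w1.
  have -> : \sum_(A : {set T}) (A == finset.set0)%:R = 1 :> R.
    rewrite (eq_bigr (fun A : {set T} => 1 * (A == finset.set0)%:R)); last by move=> *; rewrite mul1r.
    exact: (@sum_ind R {set T} (fun=> 1) finset.set0).
  by rewrite !mulr1 addrC subrK.
- move=> l; rewrite wx mulr_sumr.
  rewrite [X in _ = X](eq_bigr (fun A : {set T} => a * w A * (l \in A)%:R + (1 - a) * (A == finset.set0)%:R * (l \in A)%:R)); last by move=> A _; rewrite mulrDl.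
  rewrite big_split /= [X in _ = _ + X]big1.
    by rewrite addr0; apply: eq_bigr => A _; rewrite mulrA.
  by move=> A _; case: eqP => [->|_]; rewrite ?inE ?mulr0 ?mul0r.
Qed.

Lemma emp_hull (R : realType) (T : finType) (I : T -> {set T}) (K : nat)
  (A : nat -> {set T}) : (forall k, independent I (A k)) ->
  in_indep_hull I (fun l => K%:R^-1 * \sum_(k < K) (l \in A k)%:R : R).
Proof.
move=> Aind.
case: K => [|K].
  exists (fun B => (B == finset.set0)%:R); split; [|split; [|split]].
  - by move=> B; rewrite ler0n.
  - move=> B nB; have -> // : (B == finset.set0) = false.
    by apply/negbTE; apply: contraNneq nB => ->; exact: indep0.
  - rewrite (eq_bigr (fun B : {set T} => 1 * (B == finset.set0)%:R)); last by move=> *; rewrite mul1r.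
    exact: (@sum_ind R {set T} (fun=> 1) finset.set0).
  - move=> l; rewrite big_ord0 mulr0.
    by rewrite big1 // => B _; case: eqP => [->|_]; rewrite ?inE ?mulr0 ?mul0r.
pose W (B : {set T}) : R := K.+1%:R^-1 * \sum_(k < K.+1) (B == A k)%:R.
have gen : forall g : {set T} -> R, \sum_B W B * g B = K.+1%:R^-1 * \sum_(k < K.+1) g (A k).
  move=> g; rewrite /W.
  rewrite (eq_bigr (fun B => K.+1%:R^-1 * \sum_(k < K.+1) (g B * (B == A k)%:R))); last first.
    by move=> B _; rewrite -mulrA mulr_suml; congr (_ * _); apply: eq_bigr => k _; rewrite mulrC.
  rewrite -mulr_sumr exchange_big /=; congr (_ * _).
  by apply: eq_bigr => k _; rewrite sum_ind.
exists W; split; [|split; [|split]].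
- by move=> B; rewrite /W mulr_ge0 // ?invr_ge0 ?ler0n // sumr_ge0 // => k _; rewrite ler0n.
- move=> B nB; rewrite /W big1 ?mulr0 // => k _.
  have -> // : (B == A k) = false.
  by apply/negbTE; apply: contraNneq nB => ->.
- rewrite (eq_bigr (fun B => W B * 1)); last by move=> *; rewrite mulr1.
  rewrite gen sumr_const card_ord mulVf //.
- by move=> l; rewrite gen.
Qed.


Lemma part1 (R : realType) (T : finType) (I : T -> {set T}) (D : T -> T -> int)
  (TF : nat) (S : schedule T) (r : T -> R) :
     framed I D TF S -> collision_free I D S ->
     (2 * Dstar I D + 1 <= TF)%N ->
     rate_vector I D S r ->
     (exists x : T -> R, in_indep_hull I x /\
        forall l, r l = (1 - (Dstar I D)%:R / TF%:R) * x l) /\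
     in_indep_hull I r.
Proof.
move=> HF cf hTF Hr.
set Ds := Dstar I D in hTF *.
have TF0 : (0 < TF)%N by lia.
pose A k : {set T} := finset.finset (fun l => S l (Posz (k * TF))).
have Aind : forall k, independent I (A k) by move=> k; exact: (@frame_indep T I D TF S k HF cf hTF).
pose xK K l : R := K%:R^-1 * \sum_(k < K) (l \in A k)%:R.
pose a : R := (TF - Ds)%:R / TF%:R.
have avgE : forall l K, avg_success R I D S l (K * TF) = a * xK K l.
  move=> l K; rewrite /avg_success.
  rewrite (eq_bigr (fun t : 'I_(K*TF) => (S l (Posz t) : nat)%:R)); last first.
    by move=> t _; case St: (S l (Posz t)) => //=; rewrite (cf _ _ St).
  rewrite -natr_sum (@framed_count T I D TF S l K HF) !natrM natr_sum /xK /a.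
  rewrite (eq_bigr (fun k : 'I_K => (l \in A k)%:R)); last by move=> k _; rewrite inE.
  rewrite invfM; ring.
have cvgA : forall l, (fun K => avg_success R I D S l (K * TF)) @ \oo --> r l.
  move=> l; apply: cvg_comp (@cvg_mulnr TF TF0) (Hr l).
pose c : R := TF%:R / (TF - Ds)%:R.
have TFDs0 : (TF - Ds)%:R != 0 :> R by rewrite pnatr_eq0; lia.
have TFn0 : TF%:R != 0 :> R by rewrite pnatr_eq0; lia.
have ca : c * a = 1 by rewrite /c /a mulrA divfK // mulfV.
have cvgx : forall l, (fun K => xK K l) @ \oo --> c * r l.
  move=> l.
  have -> : (fun K => xK K l) = (fun K => c * avg_success R I D S l (K * TF)).
    by apply: funext => K; rewrite avgE mulrA ca mul1r.
  exact: (cvgM (cvg_cst c) (cvgA l)).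
have xh : in_indep_hull I (fun l => c * r l).
  apply: (@hull_closed R T I xK) => // n.
  exact: emp_hull.
have aE : 1 - Ds%:R / TF%:R = a.
  rewrite /a natrB; last by lia.
  by field.
split.
  exists (fun l => c * r l); split => // l.
  by rewrite aE mulrA [a * c]mulrC ca mul1r.
have -> : r = (fun l => a * (c * r l)) by apply: funext => l; rewrite mulrA [a * c]mulrC ca mul1r.
apply: hull_scale => //.
rewrite /a divr_ge0 ?ler0n //= ler_pdivrMr ?ltr0n ?mul1r ?ler_nat; lia.
Qed.


Lemma cnt_shift (f : nat -> bool) P (hP : forall t, f (t + P)%N = f t) n :
  (\sum_(0 <= t < n + P) f t = \sum_(0 <= t < P) f t + \sum_(0 <= t < n) f t)%N.
Proof.
rewrite (big_cat_nat _ (n := P)) //=; last by rewrite leq_addl.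
congr (_ + _)%N.
rewrite -{1}[P]add0n big_addn addnK.
by apply: eq_bigr => t _; rewrite hP.
Qed.

Lemma cnt_period (f : nat -> bool) P (hP : forall t, f (t + P)%N = f t) q rho :
  (\sum_(0 <= t < q * P + rho) f t = q * \sum_(0 <= t < P) f t + \sum_(0 <= t < rho) f t)%N.
Proof.
elim: q => [|q IH]; first by rewrite !mul0n !add0n.
have -> : (q.+1 * P + rho = (q * P + rho) + P)%N by rewrite mulSn; lia.
by rewrite cnt_shift // IH mulSn addnA.
Qed.

Lemma cnt_le (f : nat -> bool) n : (\sum_(0 <= t < n) f t <= n)%N.
Proof.
apply: leq_trans (_ : \sum_(0 <= t < n) 1 <= n)%N.
  by apply: leq_sum => t _; case: (f t).
by rewrite sum_nat_const_nat subn0 muln1.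
Qed.

Lemma periodic_avg (R : realType) (f : nat -> bool) P (P0 : (0 < P)%N)
  (hP : forall t, f (t + P)%N = f t) :
  (fun n => n%:R^-1 * (\sum_(0 <= t < n) f t)%:R : R) @ \oo -->
  ((\sum_(0 <= t < P) f t)%:R / P%:R : R).
Proof.
set C := (\sum_(0 <= t < P) f t)%N.
have CP : (C <= P)%N by exact: cnt_le.
apply/cvgrPdist_le => e e0.
have := nbhs_infty_ger (P%:R / e + 1 : R).
apply: filterS => n hn.
set Y := (\sum_(0 <= t < n) f t)%N.
have [h1 h2] : (n * C <= Y * P + P * P /\ Y * P <= n * C + P * P)%N.
  have hn' := divn_eq n P.
  set q := (n %/ P)%N in hn'; set rho := (n %% P)%N in hn'.
  have hrho : (rho < P)%N by rewrite ltn_mod.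
  have hY : Y = (q * C + \sum_(0 <= t < rho) f t)%N by rewrite /Y hn' cnt_period.
  have hr := cnt_le f rho.
  have m1 : (rho * C <= P * P)%N by apply: leq_mul; lia.
  have m2 : ((\sum_(0 <= t < rho) f t) * P <= P * P)%N by apply: leq_mul; lia.
  rewrite hY hn' !mulnDl; split; nia.
have Pr : 0 < P%:R :> R by rewrite ltr0n.
have ePn : P%:R <= e * n%:R :> R.
  have : P%:R / e <= n%:R :> R by lra.
  by rewrite ler_pdivrMr // mulrC.
have nr : 0 < n%:R :> R.
  have : 0 <= P%:R / e :> R by rewrite divr_ge0 // ?ler0n ?ltW.
  lra.
have h1r : n%:R * C%:R <= Y%:R * P%:R + P%:R * P%:R :> R.
  by rewrite -!natrM -natrD ler_nat.
have h2r : Y%:R * P%:R <= n%:R * C%:R + P%:R * P%:R :> R.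
  by rewrite -!natrM -natrD ler_nat.
have E : C%:R / P%:R - n%:R^-1 * Y%:R = (n%:R * C%:R - Y%:R * P%:R) / (P%:R * n%:R) :> R.
  by field; apply/andP; split; rewrite gt_eqF.
rewrite /= E ler_norml ler_pdivlMr ?mulr_gt0 // ler_pdivrMr ?mulr_gt0 //.
have PP : P%:R * P%:R <= e * (P%:R * n%:R) :> R.
  by rewrite mulrA (mulrC e) -mulrA ler_pM2l.
apply/andP; split; nra.
Qed.


Lemma sum_nth (X : eqType) (p : pred X) (x0 : X) (s : seq X) (N : nat) :
  ~~ p x0 -> (size s <= N)%N -> (\sum_(k < N) p (nth x0 s k) = count p s)%N.
Proof.
elim: s N => [|a s IH] [|N] //= hx hs.
- by rewrite big_ord0.
- by rewrite big1 // => k _; rewrite nth_nil (negbTE hx).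
- by rewrite big_ord_recl /= IH.
Qed.

Section Constr.
Variables (T : finType) (I : T -> {set T}) (D : T -> T -> int).
Local Notation Ds := (Dstar I D).
Variables (K0 N : nat) (s : seq {set T}).
Hypothesis K00 : (0 < K0)%N.
Hypothesis N0 : (0 < N)%N.
Hypothesis s_ind : forall A, A \in s -> independent I A.
Local Notation TF := (Ds.+1 * K0)%N.
Definition Bf k := nth finset.set0 s (k %% N).
Definition Sc : schedule T := fun l t =>
  match t with Posz n => ((n %% TF < TF - Ds)%N && (l \in Bf (n %/ TF))) | Negz _ => false end.

Lemma TF_gt : (Ds < TF)%N.
Proof. by rewrite -[(Ds.+1 * K0)%N]/(Ds.+1 * K0)%N leq_pmulr. Qed.

Lemma Bf_ind k : independent I (Bf k).
Proof.
rewrite /Bf; case: (ltnP (k %% N) (size s)) => h.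
  exact: s_ind (mem_nth _ h).
rewrite nth_default //; exact: indep0.
Qed.

Lemma Sc_framed : framed I D TF Sc.
Proof.
have hT := TF_gt.
split; [|split].
- exact: hT.
- by move=> l [n|n].
- move=> l k; split.
  + move=> i /andP [hi1 hi2] /=.
    by rewrite modnMDl modn_small // ltnNge hi1.
  + move=> i j hi hj /=.
    rewrite !modnMDl !modn_small; try lia.
    by rewrite hi hj /= !divnMDl ?divn_small //; lia.
Qed.

Lemma Sc_cf : collision_free I D Sc.
Proof.
have hT := TF_gt.
move=> l [n|n] //= /andP [hn hl]; apply/existsPn => l'; apply/negP => /andP [Hl' HS].
have hd := @Dstar_ge T I D l l' Hl'.
move: HS; case E: (Posz n + D l l') => [n'|n'] //= /andP [hn' hl'].
have Eq : (n' %/ TF = n %/ TF)%N.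
  have dn := divn_eq n TF; have dn' := divn_eq n' TF.
  set q := (n %/ TF)%N in dn *; set q' := (n' %/ TF)%N in dn' *.
  set r := (n %% TF)%N in dn hn; set r' := (n' %% TF)%N in dn' hn'.
  case: (ltngtP q' q) => // hq.
    have : (q'.+1 * TF <= q * TF)%N by rewrite leq_mul2r hq orbT.
    rewrite mulSn; lia.
  have : (q.+1 * TF <= q' * TF)%N by rewrite leq_mul2r hq orbT.
  rewrite mulSn; lia.
rewrite Eq in hl'.
have := Bf_ind (n %/ TF).
move/forallP/(_ l); rewrite hl /= => /forallP/(_ l'); rewrite Hl' hl' //.
Qed.

Lemma Sc_per l t : Sc l (Posz (t + N * TF)) = Sc l (Posz t).
Proof.
have hT := TF_gt.
rewrite /= /Bf addnC modnMDl divnMDl; last lia.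
by rewrite modnDl.
Qed.

Lemma Sc_rate (R : realType) l :
  (fun n => avg_success R I D Sc l n) @ \oo -->
  (((\sum_(0 <= t < N * TF) Sc l (Posz t))%N)%:R / (N * TF)%:R : R).
Proof.
have hT := TF_gt.
have -> : (fun n => avg_success R I D Sc l n) =
   (fun n => n%:R^-1 * (\sum_(0 <= t < n) Sc l (Posz t))%:R : R).
  apply: funext => n; rewrite /avg_success big_mkord natr_sum.
  congr (_ * _); apply: eq_bigr => t _.
  by case St: (Sc l (Posz t)) => //=; rewrite (Sc_cf l (Posz t) St).
apply: (@periodic_avg R (fun t => Sc l (Posz t))); first lia.
exact: Sc_per.
Qed.

Hypothesis size_s : (size s <= N)%N.

Lemma Sc_count l :
  (\sum_(0 <= t < N * TF) Sc l (Posz t) = (TF - Ds) * count (fun A : {set T} => l \in A) s)%N.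
Proof.
have hT := TF_gt.
rewrite big_mkord (@framed_count T I D TF Sc l N Sc_framed); congr (_ * _)%N.
rewrite -(@sum_nth _ (fun A : {set T} => l \in A) finset.set0 s N) //; last by rewrite inE.
apply: eq_bigr => k _ /=.
rewrite modnMl subn_gt0 hT /= mulnK; last lia.
by rewrite /Bf modn_small.
Qed.
End Constr.


Lemma part2 (R : realType) (T : finType) (I : T -> {set T}) (D : T -> T -> int)
  (x : T -> R) (eps : R) : in_indep_hull I x -> 0 < eps ->
     exists (TF : nat) (S : schedule T) (r : T -> R),
       framed I D TF S /\ collision_free I D S /\ rate_vector I D S r /\
       forall l, x l - eps <= r l.
Proof.
move=> [w [w0 [wi [w1 wx]]]] e0.
set Ds := Dstar I D.
pose M := #|{set T}|.
have M0 : (0 < M)%N by apply/card_gt0P; exists finset.set0.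
pose K0 := (Num.truncn (2 / eps)).+1.
pose N := (M * K0)%N.
pose c (A : {set T}) := Num.truncn (w A * N%:R).
pose s := flatten [seq nseq (c A) A | A <- index_enum {set T}].
have s_ind : forall A, A \in s -> independent I A.
  move=> A /flatten_mapP [A' _]; rewrite mem_nseq => /andP [cA /eqP ->].
  by apply: contraT => nA; move: cA; rewrite /c (wi _ nA) mul0r truncn0.
have csum : (\sum_A c A <= N)%N.
  rewrite -(ler_nat R) natr_sum.
  apply: le_trans (_ : \sum_A w A * N%:R <= N%:R).
    by apply: ler_sum => B _; rewrite truncn_le mulr_ge0 ?ler0n.
  by rewrite -mulr_suml w1 mul1r.
have size_s : (size s <= N)%N.
  rewrite size_flatten /shape -map_comp sumnE big_map.
  by apply: leq_trans csum; apply: eq_leq; apply: eq_bigr => B _ /=; rewrite size_nseq.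
have K00 : (0 < K0)%N by [].
have N0 : (0 < N)%N by rewrite muln_gt0 M0.
pose S0 := @Sc T I D K0 N s.
exists (Ds.+1 * K0)%N; exists S0.
exists (fun l => ((\sum_(0 <= t < N * (Ds.+1 * K0)) S0 l (Posz t))%N)%:R / (N * (Ds.+1 * K0))%:R).
split; first exact: Sc_framed.
split; first exact: Sc_cf.
split; first by move=> l; exact: Sc_rate.
move=> l; rewrite Sc_count //.
set z := count (fun A : {set T} => l \in A) s.
have zE : z = (\sum_A c A * (l \in A))%N.
  rewrite /z count_flatten -map_comp sumnE big_map.
  by apply: eq_bigr => B _ /=; rewrite count_nseq mulnC.
have zN : (z <= N)%N by apply: leq_trans (count_size _ _) size_s.
have zlow : N%:R * x l - M%:R <= z%:R :> R.
  rewrite zE natr_sum.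
  apply: le_trans (_ : \sum_B (w B * N%:R * (l \in B)%:R - 1) <= _).
    rewrite sumrB sumr_const wx mulr_sumr lerD2r le_eqVlt; apply/orP; left; apply/eqP.
    by apply: eq_bigr => B _; rewrite mulrA (mulrC N%:R).
  apply: ler_sum => B _; rewrite natrM.
  case: (l \in B); rewrite ?mulr1 ?mulr0 ?sub0r ?lerN10 //.
  have := truncnS_gt (w B * N%:R); rewrite -/(c B) -addn1 natrD; lra.
have hDs : (Ds <= Ds.+1 * K0)%N by apply: leq_trans (leqnSn _) (leq_pmulr _ K00).
rewrite natrM natrB // !natrM.
set a := Ds%:R : R; set k := K0%:R : R; set m := M%:R : R; set zr := z%:R : R.
have hk : 2 < k * eps.
  by rewrite -ltr_pdivrMr //; exact: truncnS_gt.
have k1 : 1 <= k by rewrite ler1n.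
have m1 : 1 <= m by rewrite ler1n.
have a0 : 0 <= a by rewrite ler0n.
have hn : N%:R = m * k :> R by rewrite natrM.
have ht : (Ds.+1)%:R = a + 1 :> R by rewrite -addn1 natrD.
rewrite ht -hn.
have zN' : zr <= N%:R by rewrite ler_nat.
have npos : 0 < N%:R :> R by rewrite ltr0n.
rewrite ler_pdivlMr; last by rewrite !mulr_gt0 // ?ltr_wpDl // ?ltr01; lra.
have h1 : (a + 1) * k * (N%:R * x l - m) <= (a + 1) * k * zr.
  by rewrite ler_wpM2l //; apply: mulr_ge0; lra.
have h2 : a * zr <= a * N%:R by rewrite ler_wpM2l.
have h4 : 2 * a + 1 <= eps * k * (a + 1) by nra.
have h3 : (a + 1) * k * m + a * N%:R <= eps * (N%:R * ((a + 1) * k)).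
  rewrite hn.
  have : m * k * (2 * a + 1) <= m * k * (eps * k * (a + 1)).
    by rewrite ler_wpM2l //; apply: mulr_ge0; lra.
  lra.
nra.
Qed.


Local Close Scope classical_set_scope.

Theorem theorem3 (R : realType) (T : finType) (I : T -> {set T})
  (D : T -> T -> int) (T_nonempty : (0 < #|T|)%N) :
  (* (i) *)
  (forall (TF : nat) (S : schedule T) (r : T -> R),
     framed I D TF S -> collision_free I D S ->
     (2 * Dstar I D + 1 <= TF)%N ->
     rate_vector I D S r ->
     (exists x : T -> R, in_indep_hull I x /\
        forall l, r l = (1 - (Dstar I D)%:R / TF%:R) * x l) /\
     in_indep_hull I r) /\
  (* (ii) *)
  (forall (x : T -> R) (eps : R), in_indep_hull I x -> 0 < eps ->
     exists (TF : nat) (S : schedule T) (r : T -> R),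
       framed I D TF S /\ collision_free I D S /\ rate_vector I D S r /\
       forall l, x l - eps <= r l).
Proof.
split.
- move=> TF S r HF cf hTF Hr; exact: (@part1 R T I D TF S r HF cf hTF Hr).
- move=> x eps Hx e0; exact: (@part2 R T I D x eps Hx e0).
Qed.
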